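(* Let $\mathcal V$ be a congruence modular variety with Day terms $m_0,\dots,m_k$, $\mathbb A\in\mathcal V$, $n\ge 2$, and $R\le\mathbb A^{2^n}$ an $(n)$-dimensional tolerance of $\mathbb A$. Let $\gamma\in R$ and let $d\in\mathbb D_n$ be a sequence of length $i\in n$. Then (1) $\gamma^d\in R$, and (2) for every $f\in 2^{n\setminus\{i\}}$ such that $f(j)=0$ for some $j<i$, the $(i)$-cross-section line of $\gamma^d$ at $f$ is a constant pair (a pair $(a,a)$).
   Context: Cube notation. $n=\{0,\dots,n-1\}$, $2=\{0,1\}$; $2^n$ is the set of functions $n\to 2$. An $(n)$-cube over $A$ is $\gamma=(\gamma_f)_{f\in2^n}\in A^{2^n}$. For $i\in n$, $j\in 2$: $\mathrm{face}_i^j(\gamma)$ is $g\mapsto\gamma_{g\cup\{(i,j)\}}$; $\mathrm{glue}_{\{i\}}(\zeta,\eta)$ is the unique cube with $\mathrm{face}_i^0=\zeta$, $\mathrm{face}_i^1=\eta$; $\mathrm{refl}_i^j(\gamma)=\mathrm{glue}_{\{i\}}(\mathrm{face}_i^j\gamma,\mathrm{face}_i^j\gamma)$; $\mathrm{sym}_i(\gamma)=\mathrm{glue}_{\{i\}}(\mathrm{face}_i^1\gamma,\mathrm{face}_i^0\gamma)$. For $f\in 2^{n\setminus\{i\}}$ the $(i)$-cross-section line of $\gamma$ at $f$ is the pair $(\gamma_{f\cup\{(i,0)\}},\gamma_{f\cup\{(i,1)\}})$. A subuniverse $R$ of $\mathbb A^{2^n}$ is an $(n)$-dimensional tolerance if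 $\mathrm{refl}_i^j(\gamma),\mathrm{sym}_i(\gamma)\in R$ for all $\gamma\in R$, $i,j$. Day terms: $4$-ary terms $m_0,\dots,m_k$ with $m_0(x,y,z,w)\approx x$, $m_k(x,y,z,w)\approx w$, $m_e(x,y,y,x)\approx x$ for all $e$, $m_e(x,x,w,w)\approx m_{e+1}(x,x,w,w)$ for even $e<k$, $m_e(x,y,y,w)\approx m_{e+1}(x,y,y,w)$ for odd $e<k$; a variety is modular iff it has Day terms. Shift rotation: for $e\in\{0,\dots,k\}$ and $i\neq j\in n$, $\mathrm{rot}^e_{i,j}(\gamma)=m_e\big(\mathrm{refl}_j^1(\gamma),\gamma,\mathrm{refl}_i^0(\gamma),\mathrm{refl}_j^1(\mathrm{refl}_i^0(\gamma))\big)$ (coordinatewise). Tree. $\mathbb D_n$ is the set of finite sequences of elements of $\{0,\dots,k\}$ of length less than $n$ (including the empty sequence $\emptyset$), ordered by extension. For $\gamma\in A^{2^n}$ set $\gamma^\emptyset=\gamma$ and, for a nonempty $d=(d_0,\dots,d_i)\in\mathbb D_n$ with predecessor $c=(d_0,\dots,d_{i-1})$, $\gamma^d=\mathrm{rot}^{d_i}_{i,i+1}(\gamma^c)$. *)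

(* Defs.v *)
From mathcomp Require Import all_boot.
Set Implicit Arguments. Unset Strict Implicit. Unset Printing Implicit Defensive.

Record signature := Signature { op_sym : Type; arity : op_sym -> nat }.

Definition algebra (S : signature) (A : Type) :=
  forall o : op_sym S, ('I_(arity o) -> A) -> A.

Inductive term (S : signature) (X : Type) : Type :=
| Var : X -> term S X
| App : forall o : op_sym S, ('I_(arity o) -> term S X) -> term S X.

Fixpoint eval (S : signature) (A : Type) (ops : algebra S A) (X : Type)
    (v : X -> A) (t : term S X) : A :=
  match t with
  | Var x => v x
  | App o args => ops o (fun j => eval ops v (args j))
  end.

Definition eval4 (S : signature) (A : Type) (ops : algebra S A)
    (t : term S 'I_4) (x y z w : A) : A :=
  eval ops (fun i : 'I_4 => nth x [:: x; y; z; w] i) t.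

Definition day_terms (S : signature) (A : Type) (ops : algebra S A)
    (k : nat) (m : nat -> term S 'I_4) : Prop :=
  [/\ (forall x y z w, eval4 ops (m 0) x y z w = x),
      (forall x y z w, eval4 ops (m k) x y z w = w),
      (forall e, e <= k -> forall x y, eval4 ops (m e) x y y x = x),
      (forall e, e < k -> ~~ odd e ->
         forall x w, eval4 ops (m e) x x w w = eval4 ops (m e.+1) x x w w) &
      (forall e, e < k -> odd e ->
         forall x y w, eval4 ops (m e) x y y w = eval4 ops (m e.+1) x y y w)].

Definition vertex (n : nat) := {ffun 'I_n -> bool}.
Definition cube (n : nat) (A : Type) := {ffun vertex n -> A}.

(** [upd f i b] = f with coordinate i set to b, i.e. (f restricted to
    n \ {i}) ∪ {(i,b)}. *)
Definition upd (n : nat) (f : vertex n) (i : nat) (b : bool) : vertex n :=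
  [ffun x : 'I_n => if nat_of_ord x == i then b else f x].

Definition refl (n : nat) (A : Type) (i : nat) (j : bool) (g : cube n A)
  : cube n A := [ffun f => g (upd f i j)].

Definition symm (n : nat) (A : Type) (i : nat) (g : cube n A) : cube n A :=
  [ffun f : vertex n =>
     g [ffun x : 'I_n => if nat_of_ord x == i then ~~ f x else f x]].

Definition subuniverse (S : signature) (A : Type) (ops : algebra S A) (n : nat)
    (R : cube n A -> Prop) : Prop :=
  forall (o : op_sym S) (args : 'I_(arity o) -> cube n A),
    (forall j, R (args j)) -> R [ffun f => ops o (fun j => args j f)].

Definition tolerance (S : signature) (A : Type) (ops : algebra S A) (n : nat)
    (R : cube n A -> Prop) : Prop :=
  [/\ subuniverse ops R,
      (forall i, i < n -> forall j g, R g -> R (refl i j g)) &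
      (forall i, i < n -> forall g, R g -> R (symm i g))].

Definition rot (S : signature) (A : Type) (ops : algebra S A)
    (m : nat -> term S 'I_4) (n : nat) (e i j : nat) (g : cube n A) : cube n A :=
  [ffun f => eval4 ops (m e) (refl j true g f) (g f) (refl i false g f)
                             (refl j true (refl i false g) f)].

Fixpoint tree_aux (S : signature) (A : Type) (ops : algebra S A)
    (m : nat -> term S 'I_4) (n : nat) (g : cube n A) (d : seq nat) (p : nat)
  : cube n A :=
  match d with
  | [::] => g
  | e :: d' => tree_aux ops m (rot ops m e p p.+1 g) d' p.+1
  end.

Definition tree_cube (S : signature) (A : Type) (ops : algebra S A)
    (m : nat -> term S 'I_4) (n : nat) (g : cube n A) (d : seq nat) : cube n A :=
  tree_aux ops m g d 0.

Definition in_tree (k n : nat) (d : seq nat) : bool :=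
  (size d < n) && all (fun e => e <= k) d.

(* Main.v *)
Require Import Defs.
From Stdlib Require Import FunctionalExtensionality.
From mathcomp Require Import all_boot.



Section Helpers.
Variables (S : signature) (A : Type) (ops : algebra S A).

Lemma closed_term (n : nat) (R : cube n A -> Prop) (X : Type) (t : term S X)
  (v : vertex n -> X -> A) :
  subuniverse ops R -> (forall x, R [ffun f => v f x]) ->
  R [ffun f => eval ops (v f) t].
Proof.
move=> sub Hv; elim: t => [x|o args IH] /=; first exact: Hv.
have := sub o (fun j => [ffun f => eval ops (v f) (args j)]) IH.
suff -> : [ffun f : vertex n => ops o (fun j => [ffun f0 : vertex n => eval ops (v f0) (args j)] f)]
   = [ffun f : vertex n => ops o (fun j => eval ops (v f) (args j))] by [].
apply/ffunP => f; rewrite !ffunE; congr (ops o _).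
by apply: functional_extensionality => j; rewrite ffunE.
Qed.

Lemma cube_eta n (c : cube n A) : [ffun f => c f] = c.
Proof. by apply/ffunP => f; rewrite ffunE. Qed.

Lemma tree_aux_rcons (m : nat -> term S 'I_4) n (g : cube n A) c e q :
  tree_aux ops m g (rcons c e) q =
  Defs.rot ops m e (q + size c) (q + size c).+1 (tree_aux ops m g c q).
Proof.
elim: c g q => [|a c IH] g q /=; first by rewrite addn0.
by rewrite IH addSnnS.
Qed.

Lemma updE n (f : vertex n) i b (x : 'I_n) :
  upd f i b x = if nat_of_ord x == i then b else f x.
Proof. by rewrite ffunE. Qed.

Lemma upd_upd n (f : vertex n) i b c : upd (upd f i b) i c = upd f i c.
Proof. by apply/ffunP => x; rewrite !updE; case: eqP. Qed.

Lemma upd_id n (f : vertex n) (o : 'I_n) b : f o = b -> upd f o b = f.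
Proof.
move=> H; apply/ffunP => x; rewrite updE; case: eqP => // /val_inj ->.
by rewrite H.
Qed.

End Helpers.

Theorem lemma2p4 (S : signature) (A : Type) (ops : algebra S A)
    (k : nat) (m : nat -> term S 'I_4) (n : nat) (R : cube n A -> Prop)
    (g : cube n A) (d : seq nat) :
  day_terms ops k m ->
  2 <= n ->
  tolerance ops R ->
  R g ->
  in_tree k n d ->
  R (tree_cube ops m g d) /\
  (forall f : vertex n,
     (exists j : 'I_n, j < size d /\ f j = false) ->
     tree_cube ops m g d (upd f (size d) false)
     = tree_cube ops m g d (upd f (size d) true)).
Proof.
move=> [_ _ Hxyyx _ _] _ [sub Hrefl _] Rg.
elim/last_ind: d => [|c e IH].
  by move=> _; split => // f [j []].
rewrite /in_tree size_rcons all_rcons => /andP [Hsz /andP [He Hall]].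
have Hc : in_tree k n c by rewrite /in_tree Hall andbT ltnW.
have [Rc IHc] := IH Hc.
rewrite /tree_cube tree_aux_rcons add0n -/(tree_cube ops m g c).
set p := size c.
set D := tree_cube ops m g c.
split.
  have -> : Defs.rot ops m e p p.+1 D =
    [ffun f => eval ops (fun i : 'I_4 => nth (refl p.+1 true D f)
       [:: refl p.+1 true D f; D f; refl p false D f;
           refl p.+1 true (refl p false D) f] i) (m e)] by [].
  apply: closed_term => // -[[|[|[|[|i]]]] Hi] //=; rewrite cube_eta //. all: idtac.
  - exact: (Hrefl _ Hsz _ _ Rc).
  - exact: Hrefl (ltnW Hsz) _ _ Rc.
  - by apply: (Hrefl) => //; apply: (Hrefl _ (ltnW Hsz) _ _ Rc).
move=> f [j [Hj Hfj]].
set o : 'I_n := Ordinal (ltnW Hsz).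
have key : forall b, D (upd (upd f p.+1 b) p false) = D (upd f p.+1 b).
  move=> b; case Hfo: (f o).
    have Hjp : j < p.
      rewrite ltnS leq_eqVlt in Hj; case/orP: Hj => // /eqP Hjo.
      have : j = o by apply: val_inj.
      by move=> E; move: Hfj; rewrite E Hfo.
    have Hh : (upd f p.+1 b) j = false.
      by rewrite updE ltn_eqF.
    rewrite (IHc _ (ex_intro _ j (conj Hjp Hh))).
    by rewrite (@upd_id _ (upd f p.+1 b) o) // updE /= ltn_eqF.
  by rewrite (@upd_id _ (upd f p.+1 b) o) // updE /= ltn_eqF.
rewrite /Defs.rot !ffunE /refl !upd_upd !key.
by rewrite !(Hxyyx e He).
Qed.
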